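(* Let $\mathfrak h=\mathfrak v\oplus\mathfrak z$ be a Lie algebra of type H with inner product $\langle\cdot,\cdot\rangle$ and maps $j_Z$. Let $Z_1\in\mathfrak z$ with $\|Z_1\|=1$, let $Z_2\in\mathfrak z$ be nonzero with $Z_2\perp Z_1$, and let $\mathfrak v=\mathfrak v_1\oplus\mathfrak v_2$ be an orthogonal decomposition into nonzero subspaces, each invariant under $j_{Z_1}$ and $j_{Z_2}$. For $r\in\mathbb R$ define $\tilde j:\mathfrak z\to\mathfrak{so}(\mathfrak v)$ by $\tilde j_{Z+\lambda Z_1}(V_1+V_2)=j_{Z+\lambda Z_1}(V_1+V_2)+(r-1)\lambda\, j_{Z_1}V_2$ for $Z\perp Z_1$, $\lambda\in\mathbb R$, $V_i\in\mathfrak v_i$, and let $\mathfrak n_r$ be the vector space $\mathfrak v\oplus\mathfrak z$ with the 2-step nilpotent Lie bracket defined by $\mathfrak z$ central, $[\mathfrak v,\mathfrak v]\subseteq\mathfrak z$ and $\langle Z,[V,W]\rangle=\langle\tilde j_ZV,W\rangle$ for $Z\in\mathfrak z$, $V,W\in\mathfrak v$. Then for every $r>0$ the Lie algebra $\mathfrak n_r$ is non-singular, and if moreover $r\neq1$ then $\mathfrak n_r$ is not isomorphic to any Lie algebra of type H.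
   Context: A metric 2-step nilpotent real Lie algebra $\mathfrak n$ with center $\mathfrak z$ and $\mathfrak v=\mathfrak z^\perp$ has maps $j_Z:\mathfrak v\to\mathfrak v$ ($Z\in\mathfrak z$) given by $\langle j_ZV,W\rangle=\langle Z,[V,W]\rangle$; it is of type H if $j_Z^2=-\langle Z,Z\rangle\mathrm{Id}$ for all $Z\in\mathfrak z$. A 2-step nilpotent Lie algebra is non-singular if $\mathrm{ad}(X):\mathfrak n\to\mathfrak z$ is onto for every $X\notin\mathfrak z$ (equivalently, $\tilde j_Z$ is invertible for every nonzero $Z$). *)

(* Defs.v *)
From HB Require Import structures.
From mathcomp Require Import all_boot all_order all_algebra.
From mathcomp Require Import reals.
Set Implicit Arguments. Unset Strict Implicit. Unset Printing Implicit Defensive.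
Import Order.TTheory GRing.Theory Num.Theory.
Local Open Scope ring_scope.

Section Defs.
Variable R : realType.

Definition ip (k : nat) (x y : 'rV[R]_k) : R := (x *m y^T) 0 0.

(* A metric 2-step nilpotent algebra v (+) z, with v = R^n and z = R^m taken
   in orthonormal coordinates, is given by the family J : 'I_m -> 'M_n where
   j_Z V = V *m jZ J Z  (row-vector convention) and jZ J Z = \sum_k Z_k J_k. *)
Definition jZ (n m : nat) (J : 'I_m -> 'M[R]_n) (Z : 'rV[R]_m) : 'M[R]_n :=
  \sum_(k < m) Z 0 k *: J k.

(* The bracket on n = v (+) z  ('rV_(n+m), v = first n coordinates):
   z central, [v,v] in z, and <Z,[V,W]> = <j_Z V, W>. *)
Definition br2 (n m : nat) (J : 'I_m -> 'M[R]_n)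
  (x y : 'rV[R]_(n + m)) : 'rV[R]_(n + m) :=
  row_mx 0 (\row_(k < m) ip (lsubmx x *m J k) (lsubmx y)).

(* Type H: the j_Z are skew-symmetric (as they are when coming from a metric
   2-step nilpotent algebra) and j_Z^2 = - <Z,Z> Id. *)
Definition typeH (n m : nat) (J : 'I_m -> 'M[R]_n) : Prop :=
  (forall k, (J k)^T = - J k) /\
  (forall Z : 'rV[R]_m, jZ J Z *m jZ J Z = - (ip Z Z) *: 1%:M).

Definition nonsingular (n m : nat) (J : 'I_m -> 'M[R]_n) : Prop :=
  forall x : 'rV[R]_(n + m), lsubmx x != 0 ->
  forall c : 'rV[R]_m, exists y, br2 J x y = row_mx 0 c.

Definition lie_iso (N N' : nat)
  (br : 'rV[R]_N -> 'rV[R]_N -> 'rV[R]_N)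
  (br' : 'rV[R]_N' -> 'rV[R]_N' -> 'rV[R]_N') : Prop :=
  exists (A : 'M[R]_(N, N')) (B : 'M[R]_(N', N)),
    [/\ A *m B = 1%:M, B *m A = 1%:M &
        forall x y, br' (x *m A) (y *m A) = br x y *m A].

(* The modified map tilde j:
   tilde j_Z V = j_Z V + (r - 1) <Z,Z1> j_{Z1} (P2 V), where P2 is the
   (orthogonal) projection of v onto v2 along v1; the coefficient of the
   basis vector e_k is tJ k. *)
Definition tJ (n m : nat) (J : 'I_m -> 'M[R]_n) (Z1 : 'rV[R]_m)
  (V1 V2 : 'M[R]_n) (r : R) (k : 'I_m) : 'M[R]_n :=
  J k + ((r - 1) * Z1 0 k) *: (proj_mx V2 V1 *m jZ J Z1).

End Defs.

(* Main.v *)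
Require Import Defs.
From HB Require Import structures.
From mathcomp Require Import all_boot all_order all_algebra.
From mathcomp Require Import reals.
From mathcomp Require Import ring lra.
Import Order.TTheory GRing.Theory Num.Theory.
Local Open Scope ring_scope.
Set Implicit Arguments. Unset Strict Implicit. Unset Printing Implicit Defensive.

Lemma mxWWt_eq0 (R : realType) (p k : nat) (W : 'M[R]_(p, k)) :
  W *m W^T = 0 -> W = 0.
Proof.
move=> H; apply/matrixP=> i j; rewrite mxE.
have : (W *m W^T) i i = 0 by rewrite H mxE.
rewrite mxE => /eqP; rewrite psumr_eq0; last first.
  by move=> l _; rewrite mxE -expr2 sqr_ge0.
move/allP/(_ j (mem_index_enum _)); rewrite mxE -expr2 sqrf_eq0 => /eqP.
done.
Qed.

Lemma ipC (R : realType) k (v w : 'rV[R]_k) : ip v w = ip w v.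
Proof. rewrite /ip. have -> : w *m v^T = (v *m w^T)^T by rewrite trmx_mul trmxK. by rewrite [in RHS]mxE. Qed.

Lemma ip_ge0 (R : realType) k (v : 'rV[R]_k) : 0 <= ip v v.
Proof. by rewrite /ip mxE sumr_ge0 // => l _; rewrite mxE -expr2 sqr_ge0. Qed.

Lemma ip_eq0 (R : realType) k (v : 'rV[R]_k) : ip v v = 0 -> v = 0.
Proof.
move=> H; apply: mxWWt_eq0; apply/matrixP=> i j.
by rewrite !ord1 [RHS]mxE; exact: H.
Qed.

Lemma ipDl (R : realType) k (u v w : 'rV[R]_k) : ip (u + v) w = ip u w + ip v w.
Proof. by rewrite /ip mulmxDl mxE. Qed.
Lemma ipDr (R : realType) k (u v w : 'rV[R]_k) : ip w (u + v) = ip w u + ip w v.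
Proof. by rewrite /ip linearD /= mulmxDr mxE. Qed.
Lemma ipZl (R : realType) k (a : R) (v w : 'rV[R]_k) : ip (a *: v) w = a * ip v w.
Proof. by rewrite /ip -scalemxAl mxE. Qed.
Lemma ipZr (R : realType) k (a : R) (v w : 'rV[R]_k) : ip w (a *: v) = a * ip w v.
Proof. by rewrite ipC ipZl ipC. Qed.
Lemma ipNl (R : realType) k (v w : 'rV[R]_k) : ip (- v) w = - ip v w.
Proof. by rewrite -scaleN1r ipZl mulN1r. Qed.
Lemma ip0l (R : realType) k (w : 'rV[R]_k) : ip 0 w = 0.
Proof. by rewrite /ip mul0mx mxE. Qed.
Lemma ipMl (R : realType) k l (M : 'M[R]_(k, l)) (v : 'rV[R]_k) (w : 'rV[R]_l) :
  ip (v *m M) w = ip v (w *m M^T).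
Proof. by rewrite /ip trmx_mul trmxK mulmxA. Qed.

Lemma ip_skew (R : realType) k (M : 'M[R]_k) (v : 'rV[R]_k) :
  M^T = - M -> ip (v *m M) v = 0.
Proof.
move=> HM; have : ip (v *m M) v = - ip (v *m M) v.
  by rewrite [LHS]ipMl HM mulmxN [LHS]ipC ipNl.
move/eqP; rewrite -subr_eq0 opprK -mulr2n mulrn_eq0 /= => /eqP //.
Qed.


Lemma zmod4 (V : zmodType) (a b c d : V) : (a + b) + (c + d) - a - d = b + c.
Proof.
apply/eqP; rewrite !subr_eq; apply/eqP.
rewrite (addrC a b) -!addrA; congr (_ + _).
by rewrite addrC -addrA.
Qed.

Lemma jZD (R : realType) n m (J : 'I_m -> 'M[R]_n) (a b : 'rV[R]_m) :
  jZ J (a + b) = jZ J a + jZ J b.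
Proof. by rewrite /jZ -big_split; apply: eq_bigr => k _; rewrite mxE scalerDl. Qed.

Lemma jZZ (R : realType) n m (J : 'I_m -> 'M[R]_n) (c : R) (a : 'rV[R]_m) :
  jZ J (c *: a) = c *: jZ J a.
Proof. by rewrite /jZ scaler_sumr; apply: eq_bigr => k _; rewrite mxE scalerA. Qed.

Lemma jZ_skew (R : realType) n m (J : 'I_m -> 'M[R]_n) (a : 'rV[R]_m) :
  typeH J -> (jZ J a)^T = - jZ J a.
Proof.
case=> HJ _; rewrite /jZ raddf_sum -sumrN; apply: eq_bigr => k _.
by rewrite [LHS]linearZ /= HJ scalerN.
Qed.

Lemma jZ_sq (R : realType) n m (J : 'I_m -> 'M[R]_n) (a : 'rV[R]_m) :
  typeH J -> jZ J a *m jZ J a = - (ip a a) *: 1%:M.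
Proof. by case=> _ H; apply: H. Qed.

Lemma jZ_anti (R : realType) n m (J : 'I_m -> 'M[R]_n) (a b : 'rV[R]_m) :
  typeH J -> jZ J a *m jZ J b + jZ J b *m jZ J a = - (2 * ip a b) *: 1%:M.
Proof.
move=> HJ.
have E := jZ_sq (a + b) HJ.
rewrite jZD mulmxDl !mulmxDr in E.
rewrite -(zmod4 (jZ J a *m jZ J a) _ _ (jZ J b *m jZ J b)) E !jZ_sq //.
rewrite -!scalerBl; congr (_ *: _).
rewrite ipDl !ipDr (ipC b a); lra.
Qed.

Lemma jZ_inj (R : realType) n m (J : 'I_m -> 'M[R]_n) (a : 'rV[R]_m) (v : 'rV[R]_n) :
  typeH J -> a != 0 -> v *m jZ J a = 0 -> v = 0.
Proof.
move=> HJ Ha Hv.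
have : v *m jZ J a *m jZ J a = 0 by rewrite Hv mul0mx.
rewrite -mulmxA jZ_sq // -scalemxAr mulmx1 => /eqP; rewrite scaler_eq0 oppr_eq0.
case/orP => [/eqP /ip_eq0 Ha0|/eqP //]; by rewrite Ha0 eqxx in Ha.
Qed.


Lemma jZ_tJ (R : realType) n m (J : 'I_m -> 'M[R]_n) (Z1 : 'rV[R]_m) (V1 V2 : 'M[R]_n) r Z :
  jZ (tJ J Z1 V1 V2 r) Z =
  jZ J Z + ((r - 1) * ip Z Z1) *: (proj_mx V2 V1 *m jZ J Z1).
Proof.
have -> : jZ (tJ J Z1 V1 V2 r) Z = \sum_k Z 0 k *: (J k + ((r - 1) * Z1 0 k) *:
   (proj_mx V2 V1 *m jZ J Z1)) by [].
under eq_bigr => k _ do rewrite scalerDr scalerA.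
rewrite big_split /= -scaler_suml; congr (_ + _ *: _).
rewrite /ip mxE mulr_sumr; apply: eq_bigr => k _; rewrite mxE; ring.
Qed.

Lemma orth_sub (R : realType) n (V1 V2 : 'M[R]_n) (p q : 'rV[R]_n) :
  V1 *m V2^T = 0 -> (p <= V1)%MS -> (q <= V2)%MS -> ip p q = 0.
Proof.
move=> H /submxP [a ->] /submxP [b ->].
by rewrite /ip trmx_mul mulmxA -(mulmxA a) H mulmx0 mul0mx mxE.
Qed.

Lemma cap0 (R : realType) n (V1 V2 : 'M[R]_n) :
  V1 *m V2^T = 0 -> (V1 :&: V2)%MS = 0.
Proof.
move=> H; apply: mxWWt_eq0.
have /submxP [a Ea] := capmxSl V1 V2.
have /submxP [b Eb] := capmxSr V1 V2.
by rewrite {1}Ea {1}Eb trmx_mul mulmxA -(mulmxA a) H mulmx0 mul0mx.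
Qed.

Lemma sub_sum (R : realType) n (V1 V2 : 'M[R]_n) (p : 'rV[R]_n) :
  (V1 + V2 == 1%:M)%MS -> (p <= V1 + V2)%MS.
Proof. by case/andP=> _ H; apply: submx_trans (submx1 p) H. Qed.

Lemma core (R : realType) n m (J : 'I_m -> 'M[R]_n) (Z1 : 'rV[R]_m) (V1 V2 : 'M[R]_n) r
  (V : 'rV[R]_n) (Z : 'rV[R]_m) :
  typeH J -> ip Z1 Z1 = 1 -> V1 *m V2^T = 0 -> (V1 + V2 == 1%:M)%MS -> 0 < r ->
  V *m jZ (tJ J Z1 V1 V2 r) Z = 0 -> V = 0 \/ Z = 0.
Proof.
move=> HJ HZ1 HV12 Hsum Hr.
have HV21 : V2 *m V1^T = 0 by rewrite -[V2]trmxK -trmx_mul HV12 trmx0.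
have C12 := cap0 HV12; have C21 := cap0 HV21.
set lam := ip Z Z1.
set P1 := proj_mx V1 V2; set P2 := proj_mx V2 V1.
set p1 := V *m P1; set p2 := V *m P2.
have Vp : V = p1 + p2 by rewrite /p1 /p2 add_proj_mx // sub_sum.
have p1s : (p1 <= V1)%MS by apply: proj_mx_sub.
have p2s : (p2 <= V2)%MS by apply: proj_mx_sub.
have o12 : ip p1 p2 = 0 by apply: orth_sub HV12 p1s p2s.
have o21 : ip p2 p1 = 0 by rewrite ipC.
set j1 := jZ J Z1; set jz := jZ J Z.
rewrite jZ_tJ mulmxDr -scalemxAr mulmxA -/p2 => H0.
have H1 : V *m jz *m j1 - ((r - 1) * lam) *: p2 = 0.
  have := congr1 (mulmx^~ j1) H0; rewrite mul0mx mulmxDl -scalemxAl -(mulmxA p2).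
  by rewrite /j1 jZ_sq // HZ1 -scalemxAr mulmx1 scaleN1r scalerN.
have H2 : ip (V *m jz *m j1) V - ((r - 1) * lam) * ip p2 V = 0.
  by rewrite -ipZl -ipNl -ipDl H1 ip0l.
have H3 : ip (V *m jz *m j1) V = - lam * ip V V.
  have A := jZ_anti Z Z1 HJ.
  have := congr1 (fun M => ip (V *m M) V) A.
  rewrite mulmxDr ipDl -scalemxAr mulmx1 ipZl -/lam.
  have -> : ip (V *m (j1 *m jz)) V = ip (V *m jz *m j1) V.
    rewrite ipMl trmx_mul !jZ_skew // mulmxN mulNmx opprK ipC mulmxA //.
  rewrite -/jz -/j1 mulmxA => E.
  move: E; set X := ip _ V; set Y := ip V V; nra.
have H4 : ip p2 V = ip p2 p2 by rewrite [in LHS]Vp ipDr o21 add0r.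
have H5 : ip V V = ip p1 p1 + ip p2 p2 by rewrite [in LHS]Vp ipDl !ipDr o12 o21 addr0 add0r.
have key : lam * (ip p1 p1 + r * ip p2 p2) = 0.
  move: H2; rewrite H3 H4 H5; set P := ip p1 p1; set Q := ip p2 p2; nra.
have P0 := ip_ge0 p1; have Q0 := ip_ge0 p2.
case: (eqVneq Z 0) => [->|Znz]; [by right | left].
case: (eqVneq lam 0) => [l0|ln0].
  by move: H0; rewrite -/lam l0 mulr0 scale0r addr0; apply: jZ_inj.
move/eqP: key; rewrite mulf_eq0 (negPf ln0) /= => /eqP key.
have Q0' : ip p2 p2 = 0 by move: key; nra.
have P0' : ip p1 p1 = 0 by move: key; rewrite Q0' mulr0 addr0.
by rewrite Vp (ip_eq0 Q0') (ip_eq0 P0') addr0.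
Qed.



Lemma nonsing (R : realType) n m (J : 'I_m -> 'M[R]_n) (Z1 : 'rV[R]_m) (V1 V2 : 'M[R]_n) r :
  typeH J -> ip Z1 Z1 = 1 -> V1 *m V2^T = 0 -> (V1 + V2 == 1%:M)%MS -> 0 < r ->
  nonsingular (tJ J Z1 V1 V2 r).
Proof.
move=> HJ HZ1 HV12 Hsum Hr x Hx c.
set V := lsubmx x; set tJ' := tJ J Z1 V1 V2 r.
pose M : 'M[R]_(m, n) := \matrix_(k, j) (V *m tJ' k) 0 j.
have rowM k : row k M = V *m tJ' k by apply/rowP=> j; rewrite !mxE.
have ZM Z : Z *m M = V *m jZ tJ' Z.
  rewrite /jZ mulmx_sumr; apply/rowP=> j; rewrite [LHS]mxE summxE.
  apply: eq_bigr=> k _; rewrite -scalemxAr [RHS]mxE -rowM [in RHS]mxE.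
  by rewrite !mxE.
have rf : row_free M.
  rewrite -kermx_eq0; apply/eqP/row_matrixP => i; rewrite row0.
  have : row i (kermx M) *m M = 0 by apply/sub_kermxP; apply: row_sub.
  rewrite ZM => /(core HJ HZ1 HV12 Hsum Hr) [V0|//].
  by move: Hx; rewrite -/V V0 eqxx.
case/row_freeP: rf => Bm HB.
exists (row_mx (c *m Bm^T) 0).
rewrite /br2 row_mxKl; congr row_mx; apply/rowP=> k; rewrite mxE.
rewrite /ip trmx_mul trmxK -rowM -row_mul mulmxA HB mul1mx.
by rewrite !mxE.
Qed.


Lemma ex_nzrow (R : realType) p k (M : 'M[R]_(p, k)) : M != 0 -> exists i, row i M != 0.
Proof.
move=> HM; apply/existsP; apply: contraR HM => /existsPn H.
apply/eqP/row_matrixP => i; rewrite row0; exact/eqP/negPn/H.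
Qed.

Lemma inv_sub (R : realType) n (V : 'M[R]_n) (j : 'M[R]_n) (q : 'rV[R]_n) :
  (V *m j <= V)%MS -> (q <= V)%MS -> (q *m j <= V)%MS.
Proof.
move=> Hj /submxP [a ->]; rewrite -mulmxA; exact: submx_trans (submxMl _ _) Hj.
Qed.

Lemma final_alg (R : realType) n m (J : 'I_m -> 'M[R]_n)
  (Z1 Z2 : 'rV[R]_m) (V1 V2 : 'M[R]_n) (r : R) (S G : 'M[R]_n) (x y c : R) :
  typeH J ->
  ip Z1 Z1 = 1 ->
  Z2 != 0 -> ip Z2 Z1 = 0 ->
  V1 != 0 -> V2 != 0 ->
  V1 *m V2^T = 0 -> (V1 + V2 == 1%:M)%MS ->
  (V1 *m jZ J Z1 <= V1)%MS -> (V1 *m jZ J Z2 <= V1)%MS ->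
  (V2 *m jZ J Z1 <= V2)%MS -> (V2 *m jZ J Z2 <= V2)%MS ->
  0 < r -> S *m G = 1%:M ->
  (forall p : 'rV_n, p *m jZ (tJ J Z1 V1 V2 r) Z1 *m S *m jZ (tJ J Z1 V1 V2 r) Z1 *m S = - x *: p) ->
  (forall p : 'rV_n, p *m jZ (tJ J Z1 V1 V2 r) Z2 *m S *m jZ (tJ J Z1 V1 V2 r) Z2 *m S = - y *: p) ->
  (forall p : 'rV_n, p *m jZ (tJ J Z1 V1 V2 r) Z1 *m S *m jZ (tJ J Z1 V1 V2 r) Z2 *m S
      + p *m jZ (tJ J Z1 V1 V2 r) Z2 *m S *m jZ (tJ J Z1 V1 V2 r) Z1 *m S = - c *: p) ->
  r = 1.
Proof.
move=> HJ HZ1 HZ2 HZ21 HV1 HV2 HV12 Hsum I11 I12 I21 I22 Hr HSG E1 E2 E3.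
have HV21 : V2 *m V1^T = 0 by rewrite -[V2]trmxK -trmx_mul HV12 trmx0.
have C21 := cap0 HV21.
have Z1nz : Z1 != 0 by apply/eqP => Z0; move: HZ1; rewrite Z0 ip0l; lra.
set K1 := jZ (tJ J Z1 V1 V2 r) Z1 in E1 E3 *; set K2 := jZ (tJ J Z1 V1 V2 r) Z2 in E2 E3 *.
set j1 := jZ J Z1; set j2 := jZ J Z2.
set mu := ip Z2 Z2.
have mu0 : mu != 0 by apply/eqP => /ip_eq0 H; rewrite H eqxx in HZ2.
have muge : 0 <= mu := ip_ge0 Z2.
have K2E : K2 = j2 by rewrite /K2 jZ_tJ HZ21 mulr0 scale0r addr0.
have K1E : K1 = j1 + (r - 1) *: (proj_mx V2 V1 *m j1).
  by rewrite /K1 jZ_tJ HZ1 mulr1.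
have K1v (q : 'rV_n) : (q <= V1)%MS -> q *m K1 = q *m j1.
  move=> Hq; rewrite K1E mulmxDr -scalemxAr mulmxA proj_mx_0 //.
  by rewrite mul0mx scaler0 addr0.
have K1u (q : 'rV_n) : (q <= V2)%MS -> q *m K1 = r *: (q *m j1).
  move=> Hq; rewrite K1E mulmxDr -scalemxAr mulmxA proj_mx_id //.
  by rewrite -{1}(scale1r (q *m j1)) -scalerDl; congr (_ *: _); ring.
have j11 (q : 'rV_n) : q *m j1 *m j1 = - q.
  by rewrite -mulmxA /j1 jZ_sq // HZ1 -scalemxAr mulmx1 scaleN1r.
have j22 (q : 'rV_n) : q *m j2 *m j2 = - mu *: q.
  by rewrite -mulmxA /j2 jZ_sq // -scalemxAr mulmx1.
have j21 (q : 'rV_n) : q *m j2 *m j1 = - (q *m j1 *m j2).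
  have A := jZ_anti Z2 Z1 HJ; rewrite HZ21 mulr0 oppr0 scale0r in A.
  apply/eqP; rewrite -addr_eq0 -!mulmxA -mulmxDr.
  by rewrite /j1 /j2 A mulmx0.
have T1 (a : 'rV_n) : a *m S *m K2 *m S = (y / mu) *: (a *m j2).
  rewrite {1}(_ : a = (- mu^-1 *: (a *m j2)) *m K2); last first.
    by rewrite K2E -scalemxAl j22 scalerA mulrNN mulVf // scale1r.
  rewrite E2 !scalerA; congr (_ *: _); field.
  exact: mu0.
have T2v (b : 'rV_n) : (b <= V1)%MS -> b *m S *m K1 *m S = x *: (b *m j1).
  move=> Hb; rewrite {1}(_ : b = (- (b *m j1)) *m K1); last first.
    rewrite K1v ?mulNmx ?j11 ?opprK //.
    by rewrite eqmx_opp; apply: inv_sub.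
  by rewrite E1 scalerN scaleNr opprK.
have T2u (b : 'rV_n) : (b <= V2)%MS -> b *m S *m K1 *m S = (x / r) *: (b *m j1).
  move=> Hb; rewrite {1}(_ : b = (- r^-1 *: (b *m j1)) *m K1); last first.
    rewrite K1u; last by rewrite scalemx_sub // inv_sub.
    by rewrite -scalemxAl j11 scalerA scalerN mulrN scaleNr opprK mulfV ?scale1r // gt_eqF.
  rewrite E1 !scalerA; congr (_ *: _); field; by rewrite gt_eqF.
have j21M : j2 *m j1 = - (j1 *m j2).
  have A := jZ_anti Z2 Z1 HJ; rewrite HZ21 mulr0 oppr0 scale0r in A.
  by apply/eqP; rewrite -addr_eq0 A.
have skw : (j1 *m j2)^T = - (j1 *m j2).
  by rewrite trmx_mul !jZ_skew // mulmxN mulNmx opprK j21M.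
have wnz (q : 'rV_n) : q != 0 -> q *m j1 *m j2 != 0.
  move=> Hq; apply/eqP => /(jZ_inj HJ HZ2) /(jZ_inj HJ Z1nz) H.
  by rewrite H eqxx in Hq.
have Kinj (q : 'rV_n) : q *m K1 = 0 -> q = 0.
  by move/(core HJ HZ1 HV12 Hsum Hr) => [//|Z0]; rewrite Z0 eqxx in Z1nz.
have [i Hi] := ex_nzrow HV1; set v := row i V1 in Hi.
have vs : (v <= V1)%MS by apply: row_sub.
have [i' Hi'] := ex_nzrow HV2; set u := row i' V2 in Hi'.
have us : (u <= V2)%MS by apply: row_sub.
have Ev : ((y / mu) - x) *: (v *m j1 *m j2) = - c *: v.
  move: (E3 v); rewrite K1v // T1 K2E (T2v (v *m j2)); last exact: inv_sub.
  by rewrite j21 scalerN -scaleNr -scalerDl.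
have Eu : ((y / mu) * r - x / r) *: (u *m j1 *m j2) = - c *: u.
  move: (E3 u); rewrite K1u // T1 K2E (T2u (u *m j2)); last exact: inv_sub.
  by rewrite j21 scalerN -scaleNr -scalemxAl scalerA -scalerDl.
have c0 : c = 0.
  have := congr1 (fun q => ip q v) Ev; rewrite /= !ipZl -mulmxA ip_skew // mulr0.
  move/esym/eqP; rewrite mulf_eq0 oppr_eq0 => /orP [/eqP //|/eqP /ip_eq0 H].
  by rewrite H eqxx in Hi.
have yx : y / mu = x.
  move: Ev; rewrite c0 oppr0 scale0r => /eqP; rewrite scaler_eq0 (negPf (wnz _ Hi)) orbF.
  by rewrite subr_eq0 => /eqP.
have x0 : x != 0.
  apply/eqP => x0; move: (E1 v); rewrite x0 oppr0 scale0r.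
  move/(congr1 (mulmx^~ G)); rewrite mul0mx -mulmxA HSG mulmx1 => /Kinj.
  move/(congr1 (mulmx^~ G)); rewrite mul0mx -mulmxA HSG mulmx1 => /Kinj H.
  by rewrite H eqxx in Hi.
move: Eu; rewrite c0 oppr0 scale0r yx => /eqP; rewrite scaler_eq0 (negPf (wnz _ Hi')) orbF.
move=> /eqP H.
have r0 : r != 0 by rewrite gt_eqF.
have : x * (r * r - 1) = 0.
  have -> : x * (r * r - 1) = (x * r - x / r) * r by field.
  by rewrite H mul0r.
move/eqP; rewrite mulf_eq0 (negPf x0) /= subr_eq0 => /eqP rr.
nra.
Qed.


Lemma br2_central (R : realType) n m (J : 'I_m -> 'M[R]_n) (c : 'rV[R]_m) y :
  br2 J (row_mx 0 c) y = 0.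
Proof.
rewrite /br2 row_mxKl; apply/eqP; rewrite row_mx_eq0 eqxx /=; apply/eqP/rowP => k.
by rewrite !mxE mul0mx ip0l.
Qed.

Lemma lsub_mulblock (R : realType) n m n' m' (a : 'rV[R]_n) (b : 'rV[R]_m)
  (A : 'M[R]_(n + m, n' + m')) :
  lsubmx (row_mx a b *m A) = a *m ulsubmx A + b *m dlsubmx A.
Proof. by rewrite -{1}(submxK A) mul_row_block row_mxKl. Qed.

Lemma ip_delta (R : realType) n (M : 'M[R]_n) (i j : 'I_n) :
  ip (delta_mx 0 i *m M) (delta_mx 0 j) = M i j.
Proof. by rewrite /ip -rowE trmx_delta -colE !mxE. Qed.

Lemma form_eq (R : realType) n (M N : 'M[R]_n) :
  (forall v w : 'rV[R]_n, ip (v *m M) w = ip (v *m N) w) -> M = N.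
Proof. by move=> H; apply/matrixP => i j; rewrite -!ip_delta H. Qed.

Lemma ip_suml (R : realType) n I (r : seq I) (P : pred I) (f : I -> 'rV[R]_n) w :
  ip (\sum_(i <- r | P i) f i) w = \sum_(i <- r | P i) ip (f i) w.
Proof. by rewrite /ip mulmx_suml summxE. Qed.

Lemma iso_m0 (R : realType) n m (J : 'I_m -> 'M[R]_n) (Z1 : 'rV[R]_m) (V1 V2 : 'M[R]_n) r
  n' (J' : 'I_0 -> 'M[R]_n') :
  typeH J -> ip Z1 Z1 = 1 -> V1 != 0 -> V1 *m V2^T = 0 -> (V1 + V2 == 1%:M)%MS -> 0 < r ->
  ~ lie_iso (br2 (tJ J Z1 V1 V2 r)) (br2 J').
Proof.
move=> HJ HZ1 HV1 HV12 Hsum Hr [A [B [HAB HBA Hbr]]].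
have NS := nonsing HJ HZ1 HV12 Hsum Hr.
have [i Hi] := ex_nzrow HV1; set v := row i V1 in Hi.
have Hx : lsubmx (row_mx v 0 : 'rV_(n + m)) != 0 by rewrite row_mxKl.
have [y Hy] := NS _ Hx Z1.
have := Hbr (row_mx v 0) y; rewrite Hy /br2.
rewrite [X in row_mx 0 X]thinmx0 row_mx0 => /(congr1 (mulmx^~ B)).
rewrite -mulmxA HAB mulmx1 mul0mx => /eqP; rewrite eq_sym row_mx_eq0 eqxx /= => /eqP Z0.
by move: HZ1; rewrite Z0 ip0l; lra.
Qed.

Lemma iso_main (R : realType) n m (J : 'I_m -> 'M[R]_n)
  (Z1 Z2 : 'rV[R]_m) (V1 V2 : 'M[R]_n) (r : R) n' m'' (J' : 'I_m''.+1 -> 'M[R]_n') :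
  typeH J ->
  ip Z1 Z1 = 1 ->
  Z2 != 0 -> ip Z2 Z1 = 0 ->
  V1 != 0 -> V2 != 0 ->
  V1 *m V2^T = 0 -> (V1 + V2 == 1%:M)%MS ->
  (V1 *m jZ J Z1 <= V1)%MS -> (V1 *m jZ J Z2 <= V1)%MS ->
  (V2 *m jZ J Z1 <= V2)%MS -> (V2 *m jZ J Z2 <= V2)%MS ->
  0 < r -> typeH J' -> lie_iso (br2 (tJ J Z1 V1 V2 r)) (br2 J') -> r = 1.
Proof.
move=> HJ HZ1 HZ2 HZ21 HV1 HV2 HV12 Hsum I11 I12 I21 I22 Hr HJ' [A [B [HAB HBA Hbr]]].
set tJ' := tJ J Z1 V1 V2 r.
have NS := nonsing HJ HZ1 HV12 Hsum Hr.
have Z1nz : Z1 != 0 by apply/eqP => Z0; move: HZ1; rewrite Z0 ip0l; lra.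
have Hbr0 x y : br2 tJ' x y = br2 J' (x *m A) (y *m A) *m B.
  by rewrite Hbr -mulmxA HAB mulmx1.
have HAdl : dlsubmx A = 0.
  apply/row_matrixP => i; rewrite row0 rowE.
  set c := delta_mx 0 i : 'rV_m; set p := c *m dlsubmx A.
  have Hw w : br2 J' (row_mx 0 c *m A) w = 0.
    by have := Hbr (row_mx 0 c) (w *m B); rewrite -mulmxA HBA mulmx1 br2_central mul0mx.
  have lp : lsubmx (row_mx 0 c *m A) = p by rewrite lsub_mulblock mul0mx add0r.
  have pk k : p *m J' k = 0.
    apply: ip_eq0; have := Hw (row_mx (p *m J' k) 0).
    rewrite /br2 lp row_mxKl => /eqP; rewrite row_mx_eq0 => /andP [_ /eqP /rowP /(_ k)].
    by rewrite !mxE.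
  have cnz : const_mx 1 != 0 :> 'rV[R]_m''.+1.
    by apply/eqP => /matrixP /(_ 0 ord0); rewrite !mxE; apply/eqP; rewrite oner_eq0.
  apply: (jZ_inj HJ' cnz).
  by rewrite /jZ mulmx_sumr big1 // => k _; rewrite -scalemxAr pk scaler0.
have HBdl : dlsubmx B = 0.
  apply/row_matrixP => i; rewrite row0 rowE.
  set c := delta_mx 0 i : 'rV_m''.+1; set p := c *m dlsubmx B.
  have Hw w : br2 tJ' (row_mx 0 c *m B) w = 0.
    by rewrite Hbr0 -mulmxA HBA mulmx1 br2_central mul0mx.
  have lp : lsubmx (row_mx 0 c *m B) = p by rewrite lsub_mulblock mul0mx add0r.
  case: (eqVneq p 0) => // Hp.
  have Hx : lsubmx (row_mx 0 c *m B) != 0 by rewrite lp.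
  have [y Hy] := NS _ Hx Z1.
  move: Hy; rewrite Hw => /eqP; rewrite eq_sym row_mx_eq0 eqxx /= => /eqP Z0.
  by rewrite Z0 eqxx in Z1nz.
set T := ulsubmx A; set U := ulsubmx B; set Adr := drsubmx A; set Bdr := drsubmx B.
have EA : A = block_mx T (ursubmx A) 0 Adr by rewrite -HAdl submxK.
have EB : B = block_mx U (ursubmx B) 0 Bdr by rewrite -HBdl submxK.
have [TU AB22] : T *m U = 1%:M /\ Adr *m Bdr = 1%:M.
  move: HAB; rewrite {1}EA {1}EB mulmx_block (scalar_mx_block n m) => /eq_block_mx [].
  by rewrite !mulmx0 !mul0mx !addr0 !add0r => -> _ _ ->.
have UT : U *m T = 1%:M.
  move: HBA; rewrite {1}EA {1}EB mulmx_block (scalar_mx_block n' m''.+1) => /eq_block_mx [].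
  by rewrite !mulmx0 !addr0 => -> _ _ _.
have Hk (v w : 'rV_n) (k : 'I_m''.+1) :
    ip (v *m T *m J' k) (w *m T) = \sum_l ip (v *m tJ' l) w * Adr l k.
  have := Hbr (row_mx v 0) (row_mx w 0).
  rewrite /br2 !lsub_mulblock !mul0mx !addr0 !row_mxKl.
  rewrite {3}EA mul_row_block !mul0mx !mulmx0 !add0r.
  move/eq_row_mx => [_ /rowP /(_ k)]; rewrite !mxE.
  by move=> ->; apply: eq_bigr => l _; rewrite mxE.
have HM k : T *m J' k *m T^T = \sum_l Adr l k *: tJ' l.
  apply: form_eq => v w; rewrite !mulmxA ipMl trmxK Hk mulmx_sumr ip_suml.
  by apply: eq_bigr => l _; rewrite -scalemxAr ipZl mulrC.
have HK Z : jZ tJ' Z = T *m jZ J' (Z *m Bdr^T) *m T^T.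
  rewrite [jZ J' _]/jZ mulmx_sumr mulmx_suml.
  under eq_bigr => k _ do rewrite -scalemxAr -scalemxAl HM scaler_sumr.
  rewrite exchange_big /=; rewrite /jZ; apply: eq_bigr => l _.
  under eq_bigr => k _ do rewrite scalerA.
  rewrite -scaler_suml; congr (_ *: _).
  have E : Z *m Bdr^T *m Adr^T = Z by rewrite -mulmxA -trmx_mul AB22 trmx1 mulmx1.
  transitivity ((Z *m Bdr^T *m Adr^T) 0 l); first by rewrite E.
  by rewrite [LHS]mxE; apply: eq_bigr => k _; rewrite [Adr^T k l]mxE.
set S := U^T *m U; set G := T *m T^T.
have TtUt : T^T *m U^T = 1%:M by rewrite -trmx_mul UT trmx1.
have SG : S *m G = 1%:M.
  by rewrite /S /G mulmxA -(mulmxA U^T U T) UT mulmx1 -trmx_mul TU trmx1.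
have GS : G *m S = 1%:M.
  by rewrite /S /G mulmxA -(mulmxA T T^T U^T) TtUt mulmx1 TU.
have KSK (a b : 'rV_m) : jZ tJ' a *m S *m jZ tJ' b =
    T *m (jZ J' (a *m Bdr^T) *m jZ J' (b *m Bdr^T)) *m T^T.
  rewrite !HK /S !mulmxA.
  rewrite -(mulmxA (T *m jZ J' (a *m Bdr^T)) T^T U^T) TtUt mulmx1.
  by rewrite -(mulmxA (T *m jZ J' (a *m Bdr^T)) U T) UT mulmx1.
have asc (p : 'rV_n) X Y : p *m X *m S *m Y *m S = p *m (X *m S *m Y) *m S.
  by rewrite !mulmxA.
have sc (p : 'rV_n) (x : R) : p *m (T *m (x *: 1%:M) *m T^T) *m S = x *: p.
  by rewrite -scalemxAr mulmx1 -scalemxAl -scalemxAr -scalemxAl -mulmxA GS mulmx1.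
apply: (final_alg (S := S) (G := G)
   (x := ip (Z1 *m Bdr^T) (Z1 *m Bdr^T)) (y := ip (Z2 *m Bdr^T) (Z2 *m Bdr^T))
   (c := 2 * ip (Z1 *m Bdr^T) (Z2 *m Bdr^T)) HJ HZ1 HZ2 HZ21 HV1 HV2 HV12 Hsum I11 I12 I21 I22 Hr SG).
- by move=> p; rewrite asc KSK jZ_sq // sc.
- by move=> p; rewrite asc KSK jZ_sq // sc.
- move=> p; rewrite !asc -mulmxDl -mulmxDr !KSK -mulmxDl -mulmxDr.
  by rewrite jZ_anti // sc.
Qed.

Unset Implicit Arguments. Set Strict Implicit. Set Printing Implicit Defensive.

Theorem mainTheorem9 (R : realType) (n m : nat) (J : 'I_m -> 'M[R]_n)
  (Z1 Z2 : 'rV[R]_m) (V1 V2 : 'M[R]_n) (r : R) :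
  typeH J ->
  ip Z1 Z1 = 1 ->
  Z2 != 0 -> ip Z2 Z1 = 0 ->
  V1 != 0 -> V2 != 0 ->
  V1 *m V2^T = 0 -> (V1 + V2 == 1%:M)%MS ->
  (V1 *m jZ J Z1 <= V1)%MS -> (V1 *m jZ J Z2 <= V1)%MS ->
  (V2 *m jZ J Z1 <= V2)%MS -> (V2 *m jZ J Z2 <= V2)%MS ->
  0 < r ->
  nonsingular (tJ J Z1 V1 V2 r) /\
  (r != 1 -> forall (n' m' : nat) (J' : 'I_m' -> 'M[R]_n'),
     typeH J' -> ~ lie_iso (br2 (tJ J Z1 V1 V2 r)) (br2 J')).
Proof.
move=> HJ HZ1 HZ2 HZ21 HV1 HV2 HV12 Hsum I11 I12 I21 I22 Hr.
split; first exact: nonsing.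
move=> Hr1 n' m' J' HJ' Hiso.
case: m' J' HJ' Hiso => [|m''] J' HJ' Hiso.
  exact: (iso_m0 HJ HZ1 HV1 HV12 Hsum Hr Hiso).
move/eqP: Hr1; apply.
exact: (iso_main HJ HZ1 HZ2 HZ21 HV1 HV2 HV12 Hsum I11 I12 I21 I22 Hr HJ' Hiso).
Qed.
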